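(* In the standing setting of the context, assume $d_1>d_4$ and that every ball $B(x,r)$ is relatively compact in $M$. Let $u(x,y)=\int_0^\infty p(t,x,y)\,dt$ be the Green function of $X$. Then for all $x,y\in M$, $$u(x,y)\asymp\frac{\phi(d(x,y))}{V(d(x,y))}.$$
   Context: Standing setting: $(M,d)$ is a locally compact separable metric space, $\mu$ a positive Radon measure on $M$ with full support, $(\mathcal{E},\mathcal{F})$ a regular Dirichlet form on $L^2(M;\mu)$ (no killing part), and $X$ the associated $\mu$-symmetric Hunt process. $V,\phi$ are increasing functions on $(0,\infty)$, $\phi^{-1}$ the inverse of $\phi$, with constants $c_i,d_i>0$ such that $c_1(R/r)^{d_1}\le V(R)/V(r)\le c_2(R/r)^{d_2}$ and $c_3(R/r)^{d_3}\le\phi(R)/\phi(r)\le c_4(R/r)^{d_4}$ for all $0<r<R<\infty$. $X$ has a symmetric heat kernel $p(t,x,y)$ defined for all $x,y\in M$, $t>0$, with $p(t,x,y)\asymp\frac{1}{V(\phi^{-1}(t))}\wedge\frac{t}{V(d(x,y))\phi(d(x,y))}$ for all $x,y,t$. $f\asymp g$ means $c^{-1}f\le g\le cf$ with $c\ge1$ independent of the variables. *)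

(* Defs.v *)
From HB Require Import structures.
From mathcomp Require Import all_boot all_order all_algebra.
From mathcomp Require Import all_classical all_reals all_analysis.
Set Implicit Arguments. Unset Strict Implicit. Unset Printing Implicit Defensive.
Import Order.TTheory GRing.Theory Num.Theory.
Local Open Scope classical_set_scope.
Local Open Scope ring_scope.

Definition is_metric {R : realType} {M : Type} (d : M -> M -> R) : Prop :=
  (forall x y, 0 <= d x y) /\ (forall x y, d x y = 0 <-> x = y) /\
  (forall x y, d x y = d y x) /\ (forall x y z, d x z <= d x y + d y z).

Definition dball {R : realType} {M : Type} (d : M -> M -> R) (x : M) (r : R)
  : set M := [set y | d x y < r].

Definition dconv {R : realType} {M : Type} (d : M -> M -> R)
  (u : nat -> M) (l : M) : Prop := (fun n => d (u n) l) @ \oo --> 0.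

(* A is relatively compact in (M,d): every sequence in A has a subsequence
   converging in M (sequential characterization, valid in metric spaces) *)
Definition d_rel_compact {R : realType} {M : Type} (d : M -> M -> R)
  (A : set M) : Prop :=
  forall u : nat -> M, (forall n, A (u n)) ->
    exists (s : nat -> nat) (l : M), (forall n, (s n < s n.+1)%N) /\
      dconv d (u \o s) l.

Definition d_separable {R : realType} {M : Type} (d : M -> M -> R) : Prop :=
  exists q : nat -> M, forall x (e : R), 0 < e -> exists n, d x (q n) < e.

Definition d_locally_compact {R : realType} {M : Type} (d : M -> M -> R)
  : Prop := forall x, exists r : R, 0 < r /\ d_rel_compact d (dball d x r).

Definition scaling {R : realType} (f : R -> R) (c c' a b : R) : Prop :=
  forall r s : R, 0 < r -> r < s ->
    c * (s / r) `^ a <= f s / f r /\ f s / f r <= c' * (s / r) `^ b.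

Definition green {R : realType} {M : Type} (p : R -> M -> M -> R) (x y : M)
  : \bar R :=
  (\int[@lebesgue_measure R]_(t in `]0%R, +oo[%classic) (p t x y)%:E)%E.

(* Main.v *)
Require Import Defs.
From HB Require Import structures.
From mathcomp Require Import all_boot all_order all_algebra.
From mathcomp Require Import all_classical all_reals all_analysis.
From mathcomp Require Import ring lra measurable_realfun.
Import Order.TTheory GRing.Theory Num.Theory.
Local Open Scope classical_set_scope.
Local Open Scope ring_scope.


Lemma geom_partial (R : realType) (r : R) n :
  (1 - r) * \sum_(0 <= k < n) r ^+ k = 1 - r ^+ n.
Proof.
elim: n => [|n IH]; first by rewrite big_geq // mulr0 expr0 subrr.
rewrite big_nat_recr //= mulrDr IH exprS; ring.
Qed.

Lemma geom_eseries_le (R : realType) (K r : R) : 0 <= K -> 0 <= r -> r < 1 ->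
  (\sum_(0 <= k <oo) (K * r ^+ k)%:E <= (K / (1 - r))%:E)%E.
Proof.
move=> K0 r0 r1.
apply: lime_le.
  by apply: is_cvg_nneseries => n _ _; rewrite lee_fin mulr_ge0 // exprn_ge0.
apply: nearW => n.
rewrite sumEFin lee_fin -big_distrr /= ler_wpM2l //.
have h1 : 0 < 1 - r by lra.
rewrite -div1r ler_pdivlMr // mulrC geom_partial.
have : 0 <= r ^+ n by rewrite exprn_ge0.
lra.
Qed.

Section Int.
Variable R : realType.
Notation lam := (@lebesgue_measure R).

Lemma int_le_cst (A : set R) (f : R -> R) (b : R) : measurable A ->
  measurable_fun A f -> (forall t, A t -> 0 <= f t <= b) ->
  (\int[lam]_(x in A) (f x)%:E <= b%:E * lam A)%E.
Proof.
move=> mA mf fb.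
rewrite -integral_cst //.
apply: ge0_le_integral => //.
- by move=> t /fb /andP[+ _]; rewrite lee_fin.
- exact/measurable_EFinP.
- by move=> t /fb /andP[_ +]; rewrite lee_fin.
Qed.

Lemma int_ge_cst (A : set R) (f : R -> R) (b : R) : measurable A ->
  measurable_fun A f -> 0 <= b -> (forall t, A t -> b <= f t) ->
  (b%:E * lam A <= \int[lam]_(x in A) (f x)%:E)%E.
Proof.
move=> mA mf b0 fb.
rewrite -integral_cst //.
apply: ge0_le_integral => //.
all: try by move=> t _; rewrite lee_fin.
all: try exact/measurable_EFinP.
Qed.

Lemma dyadic_cover (a : R) : 0 < a ->
  `[a, +oo[%classic `<=` \bigcup_k `[a * 2 ^+ k, a * 2 ^+ k.+1[%classic.
Proof.
move=> a0 t /=; rewrite in_itv /= andbT => ta.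
have [n tn] : exists n : nat, t < a * 2 ^+ n.
  have [n hn] : exists n : nat, t / a < n%:R.
    exists (Num.truncn (t / a)).+1; exact: truncnS_gt.
  exists n; rewrite -ltr_pdivrMl // mulrC (lt_le_trans hn) //.
  have := ltn_expl n (isT : (1 < 2)%N); move/ltnW => h.
  by rewrite -natrX ler_nat.
have ex : exists n, t < a * 2 ^+ n by exists n.
case: (ex_minnP ex) => m tm mmin.
case: m tm mmin => [|m] tm mmin.
  by move: tm; rewrite expr0 mulr1 ltNge ta.
exists m => //=; rewrite in_itv /= tm andbT.
by rewrite leNgt; apply/negP => /mmin; rewrite ltnn.
Qed.

Lemma dyadic_triv (a : R) : 0 < a ->
  trivIset setT (fun k : nat => `[a * 2 ^+ k, a * 2 ^+ k.+1[%classic).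
Proof.
move=> a0.
have mono : forall i j : nat, (i <= j)%N -> a * 2 ^+ i <= a * 2 ^+ j.
  by move=> i j ij; rewrite ler_pM2l // ler_eXn2l // ltr1n.
apply/trivIsetP => i j _ _ ij.
apply/seteqP; split => // t /= [].
rewrite !in_itv /= => /andP[ai bi] /andP[aj bj].
case: (ltngtP i j) ij => // h _.
- have := mono _ _ h; lra.
- have := mono _ _ h; lra.
Qed.
End Int.

Lemma two_powR_gt (R : realType) (b : R) : 1 < b -> 2 < 2 `^ b.
Proof.
move=> b1.
have l2 : 0 < ln (2 : R) by apply: ln_gt0; lra.
rewrite -(@ltr_ln R) ?posrE ?powR_gt0 //.
rewrite ln_powR.
have : ln (2:R) * 1 < ln 2 * b by rewrite ltr_pM2l.
lra.
Qed.

Lemma key_scaling (R : realType) (V phi : R -> R) (c1 c2 c4 c3 d1 d2 d3 d4 : R)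
  (r s : R) (k : nat) :
  (forall r s, 0 < r -> r <= s -> 0 < V r /\ V r <= V s) ->
  (forall r s, 0 < r -> r < s -> 0 < phi r /\ phi r < phi s) ->
  0 < c1 -> 0 < c4 -> 0 < d1 -> 0 < d4 ->
  scaling V c1 c2 d1 d2 -> scaling phi c3 c4 d3 d4 ->
  0 < r -> r <= s -> phi s = phi r * 2 ^+ k ->
  Num.min 1 (c1 * (c4^-1) `^ (d1 / d4)) * (2 `^ (d1 / d4)) ^+ k * V r <= V s.
Proof.
move=> HV Hphi c10 c40 d10 d40 sV sP r0 rs Hk.
set b := d1 / d4.
have Vr0 : 0 < V r by case: (HV r r r0 (lexx r)).
have phir0 : 0 < phi r.
  have h : r < r + 1 by rewrite ltrDl.
  by case: (Hphi r (r+1) r0 h).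
case: (ltgtP r s) rs => // [rs' _ | ers _].
- have [hV _] := sV r s r0 rs'.
  have [_ hP] := sP r s r0 rs'.
  have qpos : 0 < s / r by apply: divr_gt0 => //; lra.
  move: hP; rewrite Hk mulrAC divff ?gt_eqF // mul1r => hP.
  have h1 : 2 ^+ k * c4^-1 <= (s / r) `^ d4.
    by rewrite ler_pdivrMr // mulrC.
  have h2 : (2 ^+ k * c4^-1) `^ b <= ((s / r) `^ d4) `^ b.
    apply: ge0_ler_powR => //; first by apply: divr_ge0; lra.
    + by rewrite nnegrE mulr_ge0 // ?exprn_ge0 // invr_ge0 ltW.
    + by rewrite nnegrE powR_ge0.
  rewrite -powRrM (_ : d4 * b = d1) in h2; last by rewrite /b mulrC divfK // gt_eqF.
  rewrite (@powRM _ (2 ^+ k) (c4^-1) b) ?exprn_ge0 ?invr_ge0 ?(ltW c40) // in h2.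
  have e2 : (2 ^+ k : R) `^ b = (2 `^ b) ^+ k.
    by rewrite -powR_mulrn // powRAC powR_mulrn // powR_ge0.
  rewrite e2 in h2.

  have hV' : c1 * (s / r) `^ d1 * V r <= V s.
    by rewrite -ler_pdivlMr.
  apply: le_trans hV'.
  rewrite ler_pM2r //.
  apply: (@le_trans _ _ (c1 * (c4^-1 `^ b) * (2 `^ b) ^+ k)).
    rewrite ler_pM2r ?exprn_gt0 ?powR_gt0 //; first by rewrite ge_min lexx orbT.
  rewrite -mulrA ler_pM2l // mulrC; exact: h2.
- rewrite -ers in Hk *; move: Hk; case: k => [|k] Hk.
    rewrite expr0 mulr1 ler_piMl // ?ge_min ?lexx //; last lra.
  exfalso.
  have : phi r * 2 <= phi r * 2 ^+ k.+1.
    rewrite ler_pM2l // exprS ler_peMr // exprn_ege1 //; lra.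
  lra.
Qed.

Theorem lemma4p6 (R : realType) (dM : measure_display) (M : measurableType dM)
  (d : M -> M -> R) (mu : {measure set M -> \bar R})
  (p : R -> M -> M -> R) (V phi phi_inv : R -> R)
  (c1 c2 c3 c4 d1 d2 d3 d4 : R) :
  (* metric space, locally compact, separable *)
  is_metric d -> d_locally_compact d -> d_separable d ->
  (* mu: balls are measurable, have finite and positive (full support) measure *)
  (forall x r, measurable (dball d x r)) ->
  (forall x r, 0 < r -> (0 < mu (dball d x r))%E /\ (mu (dball d x r) < +oo)%E) ->
  (* every ball is relatively compact *)
  (forall x r, 0 < r -> d_rel_compact d (dball d x r)) ->
  (* V, phi increasing on (0,oo), positive; phi_inv the inverse of phi *)
  (forall r s, 0 < r -> r <= s -> 0 < V r /\ V r <= V s) ->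
  (forall r s, 0 < r -> r < s -> 0 < phi r /\ phi r < phi s) ->
  (forall r, 0 < r -> 0 < phi_inv r /\ phi (phi_inv r) = r /\ phi_inv (phi r) = r) ->
  0 < c1 -> 0 < c2 -> 0 < c3 -> 0 < c4 ->
  0 < d1 -> 0 < d2 -> 0 < d3 -> 0 < d4 ->
  scaling V c1 c2 d1 d2 -> scaling phi c3 c4 d3 d4 ->
  (* p: symmetric sub-Markovian transition density of X (w.r.t. mu) *)
  (forall x y, measurable_fun setT (fun t => p t x y)) ->
  (forall t x, 0 < t -> measurable_fun setT (p t x)) ->
  (forall t x y, 0 < t -> 0 <= p t x y /\ p t x y = p t y x) ->
  (forall t x, 0 < t -> (\int[mu]_(y in setT) (p t x y)%:E <= 1)%E) ->
  (forall s t x y, 0 < s -> 0 < t ->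
     (\int[mu]_(z in setT) (p s x z * p t z y)%:E = (p (s + t) x y)%:E)%E) ->
  (* two-sided heat kernel estimate *)
  (exists c, 1 <= c /\ forall t x y, 0 < t ->
     let m := if x == y then 1 / V (phi_inv t)
              else Num.min (1 / V (phi_inv t)) (t / (V (d x y) * phi (d x y))) in
     c^-1 * m <= p t x y /\ p t x y <= c * m) ->
  (* extra assumption of the lemma *)
  d4 < d1 ->
  (* Green function estimate *)
  exists C, 1 <= C /\ forall x y, x <> y ->
    (((C^-1 * (phi (d x y) / V (d x y)))%:E <= green p x y) /\
     (green p x y <= (C * (phi (d x y) / V (d x y)))%:E))%E.
Proof.
move=> hmet _ _ _ _ _ HV Hphi Hinv c10 c20 c30 c40 d10 d20 d30 d40 sV sP mpt _ Hp _ _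
  [c [c1le hk]] d41.
set b := d1 / d4.
have b1 : 1 < b by rewrite /b ltr_pdivlMr // mul1r.
have r2 : 2 < 2 `^ b := @two_powR_gt _ _ b1.
set rho := 2 / 2 `^ b.
have pb0 : 0 < 2 `^ b by lra.
have rho0 : 0 <= rho by rewrite /rho divr_ge0 //; lra.
have rho1 : rho < 1 by rewrite /rho ltr_pdivrMr // mul1r.
set K0 := Num.min 1 (c1 * c4^-1 `^ b).
have K00 : 0 < K0 by rewrite /K0 lt_min ltr01 mulr_gt0 // powR_gt0 // invr_gt0.
have c0 : 0 < c by lra.
set D := c / (K0 * (1 - rho)).
have D0 : 0 <= D by rewrite /D divr_ge0 ?mulr_ge0; lra.
exists (4 * c + D); split; first lra.
move=> x y xy.
have [dge0 [deq _]] := hmet.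
set r := d x y.
have r0 : 0 < r.
  rewrite lt_neqAle dge0 andbT; apply/eqP => h; apply: xy; apply/deq; exact: esym h.
set a := phi r.
have a0 : 0 < a.
  have h : r < r + 1 by rewrite ltrDl.
  by case: (Hphi r (r+1) r0 h).
have a2 : 0 < a / 2 by rewrite divr_gt0.
set Vr := V r.
have Vr0 : 0 < Vr by case: (HV r r r0 (lexx r)).
have xyF : (x == y) = false by apply/eqP.
set m := fun t => Num.min (1 / V (phi_inv t)) (t / (V r * phi r)).
have hk' : forall t, 0 < t -> c^-1 * m t <= p t x y /\ p t x y <= c * m t.
  by move=> t t0; have := hk t x y t0; rewrite /= xyF.
have inv_le : forall t s, 0 < t -> 0 < s -> t <= phi s -> phi_inv t <= s.
  move=> t s t0 s0 ts; rewrite leNgt; apply/negP => h.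
  have [_ h2] := Hphi s (phi_inv t) s0 h.
  have [_ [e _]] := Hinv t t0; rewrite e in h2; lra.
have inv_ge : forall t s, 0 < t -> 0 < s -> phi s <= t -> s <= phi_inv t.
  move=> t s t0 s0 ts; rewrite leNgt; apply/negP => h.
  have [i0 [e _]] := Hinv t t0.
  have [_ h2] := Hphi (phi_inv t) s i0 h.
  rewrite e in h2; lra.
have mgR : forall A, measurable A -> measurable_fun A (fun t => p t x y).
  by move=> A mA; apply: (measurable_funS measurableT (@subsetT _ A) (mpt x y)).
have mgE : forall A, measurable A -> measurable_fun A (fun t => (p t x y)%:E).
  by move=> A mA; apply/measurable_EFinP; exact: mgR.
have g0 : forall t, 0 < t -> 0 <= p t x y by move=> t t0; case: (Hp t x y t0).
have mB : measurable (`]0, +oo[%classic : set R) by [].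
have gB : forall t, `]0, +oo[%classic t -> (0 <= (p t x y)%:E)%E.
  by move=> t /=; rewrite in_itv /= andbT => t0; rewrite lee_fin g0.
rewrite /green; split.
-
  have sub : `[a / 2, a]%classic `<=` `]0, +oo[%classic.
    move=> t /=; rewrite !in_itv /= andbT => /andP[h _].
    have : 0 < a / 2 by rewrite divr_gt0.
    lra.
  have hsub := ge0_subset_integral (@lebesgue_measure R) (measurable_itv _) mB (mgE _ mB) gB sub.
  apply: le_trans hsub.
  have hcst : ((c^-1 / (2 * Vr))%:E * (@lebesgue_measure R) `[(a / 2)%R, a%R]%classic <=
     \int[@lebesgue_measure R]_(t in `[(a / 2)%R, a%R]%classic) (p t x y)%:E)%E.
    apply: int_ge_cst => //; first exact: mgR.
      by rewrite divr_ge0 // ?invr_ge0 ?mulr_ge0 //; lra.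
    move=> t /=; rewrite in_itv /= => /andP[t1 t2].
    have t0 : 0 < t by lra.
    have [h _] := hk' t t0.
    apply: le_trans h.
    rewrite ler_pM2l ?invr_gt0 //.
    rewrite /m le_min; apply/andP; split.
    * have i0 : 0 < phi_inv t by case: (Hinv t t0).
      have il : phi_inv t <= r by apply: inv_le.
      have [Vi0 Vil] := HV _ _ i0 il.
      rewrite !div1r -[_^-1]mul1r ler_pdivrMr ?mulr_gt0 //.
      rewrite ler_pdivlMl //.
      have : Vr <= 2 * Vr by lra.
      rewrite -/Vr in Vil; lra.
    * rewrite -/Vr -/a.
      rewrite ler_pdivlMr ?mulr_gt0 //.
      have -> : (2 * Vr)^-1 * (Vr * a) = a / 2 by field; rewrite gt_eqF.
      by [].
  apply: le_trans hcst.
  rewrite lebesgue_measure_itv /= lte_fin.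
  have -> : (a / 2 < a) = true by apply/idP; lra.
  rewrite -EFinB -EFinM lee_fin.
  have hC : 4 * c <= 4 * c + D by lra.
  have hCi : (4 * c + D)^-1 <= (4 * c)^-1.
    by rewrite lef_pV2 ?posrE //; lra.
  apply: le_trans (ler_wpM2r _ hCi) _; first by rewrite divr_ge0 // ltW.
  rewrite le_eqVlt; apply/orP; left; apply/eqP; field.
  by rewrite !gt_eqF //; lra.
- have mA0 : measurable (`]0, a[%classic : set R) by [].
  have mA1 : measurable (`[a, +oo[%classic : set R) by [].
  have eU : `]0, +oo[%classic = `]0, a[%classic `|` `[a, +oo[%classic.
    apply/seteqP; split => t /=.
    + rewrite !in_itv /= andbT => t0.
      by case: (ltP t a) => ta; [left|right]; rewrite ?t0.
    + move=> [] /=; rewrite !in_itv /= ?andbT.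
        by move=> /andP[].
      have := a0; lra.
  have dU : [disjoint `]0, a[%classic & `[a, +oo[%classic].
    apply/disj_setPS => t /= [].
    by rewrite !in_itv /= andbT => /andP[_ h1] h2; lra.
  rewrite eU ge0_integral_setU //; first last.
  + by rewrite -eU.
  + by rewrite -eU; exact: mgE.
  have h1 : (\int[@lebesgue_measure R]_(t in `]0%R, a%R[%classic) (p t x y)%:E <=
             (c / Vr)%:E * (@lebesgue_measure R) `]0%R, a%R[%classic)%E.
    apply: int_le_cst => //; first exact: mgR.
    move=> t /=; rewrite in_itv /= => /andP[t0 ta].
    rewrite g0 //=.
    have [_ h] := hk' t t0.
    apply: le_trans h _.
    rewrite ler_pM2l //.
    have hm : m t <= t / (V r * phi r) by rewrite /m ge_min lexx orbT.
    apply: le_trans hm _.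
    rewrite -/Vr -/a ler_pdivrMr ?mulr_gt0 //.
    have -> : Vr^-1 * (Vr * a) = a by field; rewrite gt_eqF.
    exact: ltW.
  set K := a * c / (K0 * Vr).
  have K0' : 0 <= K by rewrite /K divr_ge0 ?mulr_ge0; lra.
  set F := fun k : nat => `[a * 2 ^+ k, a * 2 ^+ k.+1[%classic : set R.
  have mF : forall k, measurable (F k) by move=> k; exact: measurable_itv.
  have mU : measurable (\bigcup_k F k) by apply: bigcup_measurable => k _.
  have cov : `[a, +oo[%classic `<=` \bigcup_k F k := @dyadic_cover _ a a0.
  have wpos : forall k, 0 < a * 2 ^+ k by move=> k; rewrite mulr_gt0 // exprn_gt0.
  have FU : forall t, (\bigcup_k F k) t -> 0 < t.
    move=> t [k _]; rewrite /F /= in_itv /= => /andP[h _].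
    by have := wpos k; lra.
  have gU : forall t, (\bigcup_k F k) t -> (0 <= (p t x y)%:E)%E.
    by move=> t /FU t0; rewrite lee_fin g0.
  have h2a := ge0_subset_integral (@lebesgue_measure R) mA1 mU (mgE _ mU) gU cov.
  rewrite ge0_integral_bigcup // in h2a; last 2 first.
  + exact: mgE.
  + exact: (@dyadic_triv _ a a0).
  have h2b : (\sum_(0 <= i <oo) \int[@lebesgue_measure R]_(t in F i) (p t x y)%:E <=
              \sum_(0 <= i <oo) (K * rho ^+ i)%:E)%E.
    apply: lee_nneseries.
      move=> i _ _; apply: integral_ge0 => t Ft.
      by apply: gU; exists i.
    move=> k _.
    have hk2 : forall t, F k t -> 0 <= p t x y <= c / (K0 * (2 `^ b) ^+ k * Vr).
      move=> t; rewrite /F /= in_itv /= => /andP[t1 t2].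
      have t0 : 0 < t by have := wpos k; lra.
      rewrite g0 //=.
      have [s0 [es _]] := Hinv _ (wpos k).
      have rs : r <= phi_inv (a * 2 ^+ k).
        apply: inv_ge; [exact: wpos| exact: r0|].
        have e1 : (1:R) <= 2 ^+ k by apply: exprn_ege1; lra.
        by apply: ler_peMr; [exact: ltW | exact: e1].
      have key := @key_scaling _ V phi c1 c2 c4 c3 d1 d2 d3 d4 r _ k HV Hphi c10 c40 d10 d40 sV sP r0 rs es.
      have st : phi_inv (a * 2 ^+ k) <= phi_inv t by apply: inv_ge => //; rewrite es.
      have [_ Vst] := HV _ (phi_inv t) s0 st.
      have [_ h] := hk' t t0; apply: le_trans h _.
      rewrite ler_pM2l //.
      have hm : m t <= 1 / V (phi_inv t) by rewrite /m ge_min lexx.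
      apply: le_trans hm _.
      have Q0 : 0 < K0 * (2 `^ b) ^+ k * Vr by rewrite !mulr_gt0 // exprn_gt0.
      have QV := le_trans key Vst.
      rewrite div1r lef_pV2 ?posrE //.
      exact: lt_le_trans QV.
    apply: le_trans (@int_le_cst _ _ _ _ (mF k) (mgR _ (mF k)) hk2) _.
    rewrite lebesgue_measure_itv /= lte_fin.
    have w2 : a * 2 ^+ k.+1 = 2 * (a * 2 ^+ k) by rewrite exprS; ring.
    have -> : (a * 2 ^+ k < a * 2 ^+ k.+1) = true.
      by apply/idP; rewrite w2; have := wpos k; lra.
    rewrite -EFinB -EFinM lee_fin w2.
    rewrite /K /rho expr_div_n.
    rewrite le_eqVlt; apply/orP; left; apply/eqP; field.
    by rewrite !gt_eqF ?exprn_gt0 //; lra.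
  have h2c := @geom_eseries_le _ K rho K0' rho0 rho1.
  have h2 := le_trans h2a (le_trans h2b h2c).
  apply: le_trans (leeD h1 h2) _.
  rewrite lebesgue_measure_itv /= lte_fin a0 -EFinB -EFinM -EFinD lee_fin subr0.
  have -> : K / (1 - rho) = D * (a / Vr).
    rewrite /K /D; field.
    by rewrite !gt_eqF ?mulr_gt0 //; lra.
  have -> : c / Vr * a = c * (a / Vr) by rewrite mulrA mulrAC.
  rewrite -mulrDl ler_wpM2r ?divr_ge0 //; lra.
Qed.
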